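(* For every dimension $d\geq 2$ and every $0<p<1/2$, every branching point of every solution to the Gilbert--Steiner problem in $\mathbb{R}^d$ with cost $c(x)=x^p$ has degree three (only triple branching occurs).
   Context: Let $\mu^+,\mu^-$ be finite measures on $\mathbb{R}^d$ with finite supports and equal total mass. A $(\mu^+,\mu^-)$-flow consists of a finite vertex set $V\subset\mathbb{R}^d$ containing the support of $\mu^+-\mu^-$, a finite set $E$ of unordered pairs $\{x,y\}\subset V$, and non-zero reals $m(x,y)=-m(y,x)$ on edges such that $\mu^+-\mu^-=\sum_{\{x,y\}\in E} m(x,y)(\delta_y-\delta_x)$. The Gilbert functional is $\sum_{\{x,y\}\in E}|m(x,y)|^p\,|x-y|$; a solution of the Gilbert--Steiner problem is a flow minimizing it. Branching points are vertices not in $\operatorname{supp}\mu^+\cup\operatorname{supp}\mu^-$; branching points of degree 2 are understood to be eliminated by merging their two edges. *)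

(* Defs.v *)
From HB Require Import structures.
From mathcomp Require Import all_boot all_order all_algebra.
From mathcomp Require Import reals exp.
Set Implicit Arguments. Unset Strict Implicit. Unset Printing Implicit Defensive.
Import Order.TTheory GRing.Theory Num.Theory.
Local Open Scope ring_scope.

Notation point R d := 'rV[R]_d.

Definition edist (R : realType) (d : nat) (x y : point R d) : R :=
  Num.sqrt (\sum_(i < d) (x ord0 i - y ord0 i) ^+ 2).

(* A finite (nonnegative) measure on R^d whose support is contained in the
   finite list S, represented by its weights mu x = mu({x}). *)
Definition fin_measure_on (R : realType) (d : nat) (S : seq (point R d))
  (mu : point R d -> R) : Prop :=
  (forall x, 0 <= mu x) /\ (forall x, mu x != 0 -> x \in S).

(* A flow: a finite vertex set V and antisymmetric edge weights m; the edge
   set E is exactly the set of unordered pairs {x,y} with m x y != 0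
   (the paper requires m nonzero on edges, and m(x,x) = 0 by antisymmetry). *)
Record flow (R : realType) (d : nat) := Flow {
  fV : seq (point R d);
  fm : point R d -> point R d -> R }.

(* (mu+,mu-)-flow: V contains supp(mu+ - mu-), edges lie in V, m antisymmetric,
   and mu+ - mu- = sum_{{x,y} in E} m(x,y)(delta_y - delta_x), evaluated
   pointwise at every z: (mu+ - mu-)(z) = sum_{w in V} m(w,z). *)
Definition is_flow (R : realType) (d : nat) (mup mum : point R d -> R)
  (F : flow R d) : Prop :=
  [/\ uniq (fV F),
      (forall x, mup x - mum x != 0 -> x \in fV F),
      (forall x y, fm F x y = - fm F y x),
      (forall x y, fm F x y != 0 -> (x \in fV F) && (y \in fV F)) &
      (forall z, mup z - mum z = \sum_(w <- fV F) fm F w z)].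

(* Gilbert cost sum_{{x,y} in E} |m(x,y)|^p |x-y|; each unordered edge is
   counted twice in the double sum, hence the factor 1/2.  Terms with
   m x y = 0 vanish since p > 0. *)
Definition gilbert_cost (R : realType) (d : nat) (p : R) (F : flow R d) : R :=
  2^-1 * \sum_(x <- fV F) \sum_(y <- fV F) (powR `|fm F x y| p * edist x y).

Definition gilbert_steiner_solution (R : realType) (d : nat) (p : R)
  (mup mum : point R d -> R) (F : flow R d) : Prop :=
  is_flow mup mum F /\
  forall G : flow R d, is_flow mup mum G -> gilbert_cost p F <= gilbert_cost p G.

Definition vdeg (R : realType) (d : nat) (F : flow R d) (z : point R d) : nat :=
  count (fun w => fm F z w != 0) (fV F).

Definition branching_point (R : realType) (d : nat) (mup mum : point R d -> R)
  (F : flow R d) (z : point R d) : Prop :=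
  z \in fV F /\ mup z = 0 /\ mum z = 0.

(* Main.v *)
Require Import Defs.
From HB Require Import structures.
From mathcomp Require Import all_boot all_order all_algebra.
From mathcomp Require Import mathcomp_extra boolp classical_sets functions reals topology normedtype derive realfun exp.
From mathcomp Require Import ring lra.
Require Import Defs.
Import Order.TTheory GRing.Theory Num.Theory.
Import numFieldNormedType.Exports.
Local Open Scope ring_scope.
Section Anal.
Variable R : realType.
Implicit Types (a b c q r t x y z : R).

Lemma powR_ltr_neg r a b : r < 0 -> 0 < a -> a < b -> powR b r < powR a r.
Proof.
move=> r0 a0 ab.
have s0 : 0 < - r by rewrite oppr_gt0.
rewrite -(opprK r) (powRN b (- r)) (powRN a (- r)) ltf_pV2 ?posrE ?powR_gt0 //; last by rewrite (lt_trans a0).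
apply: gt0_ltr_powR => //; first by rewrite nnegrE ltW.
by rewrite nnegrE ltW // (lt_trans a0).
Qed.

Lemma powR_ltr_pos r a b : 0 < r -> 0 <= a -> a < b -> powR a r < powR b r.
Proof.
move=> r0 a0 ab; apply: gt0_ltr_powR => //; rewrite nnegrE //.
by rewrite ltW // (le_lt_trans a0).
Qed.

Lemma powR_ler_pos r a b : 0 <= r -> 0 <= a -> a <= b -> powR a r <= powR b r.
Proof.
move=> r0 a0 ab; apply: ge0_ler_powR => //; rewrite nnegrE //.
by rewrite (le_trans a0).
Qed.

Lemma powR_subadd q a b : 0 < q -> q <= 1 -> 0 <= a -> 0 <= b ->
  powR (a + b) q <= powR a q + powR b q.
Proof.
move=> q0 q1 a0 b0.
have [s0|s0] := eqVneq (a + b) 0.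
  rewrite s0 powR0 ?gt_eqF //; by rewrite addr_ge0 ?powR_ge0.
have sp : 0 < a + b by rewrite lt_def s0 addr_ge0.
have h u : 0 <= u -> u <= a + b -> u / (a + b) <= powR (u / (a + b)) q.
  move=> u0 us; have [->|un] := eqVneq u 0; first by rewrite mul0r powR_ge0.
  apply: ger1_powR => //; rewrite divr_gt0 ?ler_pdivrMr ?mul1r //.
  by rewrite lt_def un u0.
have E u : 0 <= u -> powR u q = powR (a + b) q * powR (u / (a + b)) q.
  move=> u0; rewrite -powRM; [|exact: ltW sp|exact: divr_ge0 u0 (ltW sp)].
  by rewrite mulrC divfK.
rewrite (E a a0) (E b b0) -mulrDr.
rewrite -{1}(mulr1 (powR (a + b) q)) ler_wpM2l ?powR_ge0 //.
apply: le_trans (lerD (h a a0 _) (h b b0 _)); last 2 first.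
- by rewrite lerDl.
- by rewrite lerDr.
by rewrite -mulrDl divff.
Qed.

Lemma is_derive_pshift q c t : 0 < t + c ->
  is_derive t 1 (fun s => powR (s + c) q) (q * powR (t + c) (q - 1)).
Proof.
move=> tc.
have := @is_derive1_comp R (fun x : R => powR x q) (shift c) t _ 1 (is_derive1_powR q tc) (is_derive_shift t 1 c).
by rewrite mulr1.
Qed.


Lemma mvt_pos (F : R -> R) (dF : R -> R) a b :
  a < b -> (forall t, a <= t -> t <= b -> is_derive t 1 F (dF t)) ->
  (forall t, a < t -> t < b -> 0 < dF t) -> F a < F b.
Proof.
move=> ab hd hp; rewrite -subr_gt0.
have [c cab ->] : exists2 c, c \in `]a, b[%R & F b - F a = dF c * (b - a).
  apply: MVT => //.
    move=> t; rewrite in_itv /= => /andP[h1 h2]; apply: hd; exact: ltW.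
  apply: derivable_within_continuous => t; rewrite in_itv /= => /andP[h1 h2].
  by have := hd t h1 h2 => -[].
move: cab; rewrite in_itv /= => /andP[h1 h2].
by rewrite mulr_gt0 ?subr_gt0 //; exact: hp.
Qed.

Lemma mvt_pos' (F : R -> R) (dF : R -> R) a b :
  a < b -> (forall t, a <= t -> t <= b -> is_derive t 1 F (dF t)) ->
  (forall t, a < t -> t < b -> 0 < dF t) -> 0 < F b - F a.
Proof. by move=> ab hd hp; rewrite subr_gt0; apply: mvt_pos hp. Qed.

Lemma psi_decr q x a b : 0 < q -> q < 1 -> 0 < x -> 0 < a -> a < b ->
  powR b (q - 1) - powR (b + x) (q - 1) < powR a (q - 1) - powR (a + x) (q - 1).
Proof.
move=> q0 q1 x0 a0 ab.
set r := q - 1.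
have r0 : r < 0 by rewrite /r subr_lt0.
pose F := (fun t => powR (t + x) r) - (fun t => powR (t + 0) r).
pose dF := fun t => r * powR (t + x) (r - 1) - r * powR (t + 0) (r - 1).
suff : powR (a + x) r - powR (a + 0) r < powR (b + x) r - powR (b + 0) r.
  by rewrite !addr0 => h; lra.
apply: (@mvt_pos F dF a b ab).
- move=> t ha hb; apply: is_deriveB; apply: is_derive_pshift; lra.
- move=> t ha hb; rewrite /dF !addr0 -mulrBr nmulr_rgt0 // subr_lt0.
  apply: powR_ltr_neg; first by rewrite subr_lt0 (lt_trans r0).
    lra.
  lra.
Qed.

Definition Kf q x y t :=
  powR (t + 0) q + powR (t + (x + y)) q - powR (t + x) q - powR (t + y) q.

Lemma Kf_incr q x y a b : 0 < q -> q < 1 -> 0 < x -> 0 < y -> 0 < a -> a < b ->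
  Kf q x y a < Kf q x y b.
Proof.
move=> q0 q1 x0 y0 a0 ab.
pose dF := fun t => q * powR (t + 0) (q - 1) + q * powR (t + (x + y)) (q - 1)
  - q * powR (t + x) (q - 1) - q * powR (t + y) (q - 1).
apply: (@mvt_pos (Kf q x y) dF) => //.
- move=> t ha hb; have t0 : 0 < t by exact: lt_le_trans ha.
  rewrite /Kf; apply: is_deriveB; [apply: is_deriveB; [apply: is_deriveD|]|];
    apply: is_derive_pshift.
  + by rewrite addr0.
  + by rewrite addr_gt0 // addr_gt0.
  + by rewrite addr_gt0.
  + by rewrite addr_gt0.
- move=> t ha hb; have t0 : 0 < t by exact: lt_trans ha.
  rewrite /dF.
  have -> : q * powR (t + 0) (q - 1) + q * powR (t + (x + y)) (q - 1) -
     q * powR (t + x) (q - 1) - q * powR (t + y) (q - 1) =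
     q * ((powR t (q - 1) - powR (t + x) (q - 1)) -
          (powR (t + y) (q - 1) - powR (t + y + x) (q - 1))).
    have -> : t + y + x = t + (x + y) by ring.
    rewrite addr0; ring.
  rewrite mulr_gt0 // subr_gt0; apply: psi_decr => //.
  by rewrite ltrDl.
Qed.

Lemma hlawka q x y z : 0 < q -> q < 1 -> 0 < x -> 0 < y -> 0 < z ->
  powR (x + y) q + powR (x + z) q + powR (y + z) q <
  powR x q + powR y q + powR z q + powR (x + y + z) q.
Proof.
move=> q0 q1 x0 y0 z0.
pose k t := Kf q x y t + powR x q + powR y q - powR (x + y) q.
have kz : k z = powR x q + powR y q + powR z q + powR (x + y + z) q
   - (powR (x + y) q + powR (x + z) q + powR (y + z) q).
  rewrite /k /Kf addr0 (addrC z (x + y)) (addrC z x) (addrC z y); ring.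
suff : 0 < k z by rewrite kz subr_gt0.
have klow t : 0 < t -> - powR t q <= k t.
  move=> t0; rewrite /k /Kf addr0.
  have h1 := @powR_subadd q t x q0 (ltW q1) (ltW t0) (ltW x0).
  have h2 := @powR_subadd q t y q0 (ltW q1) (ltW t0) (ltW y0).
  have h3 : powR (x + y) q <= powR (t + (x + y)) q.
    by apply: powR_ler_pos; [exact: ltW|lra|lra].
  lra.
have z2 : 0 < z / 2 by lra.
have z2z : z / 2 < z by lra.
set del := k z - k (z / 2).
have del0 : 0 < del.
  by rewrite /del /k subr_gt0 !ltrD2r; apply: Kf_incr.
pose t := Num.min (z / 4) (powR (del / 2) q^-1).
have t0 : 0 < t by rewrite /t lt_min divr_gt0 //= powR_gt0 // divr_gt0.
have tz : t < z / 2.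
  rewrite /t gt_min; apply/orP; left.
  by rewrite ltr_pM2l // ltf_pV2 ?posrE // ltr_nat.
have tq : powR t q <= del / 2.
  apply: (@le_trans _ _ (powR (powR (del / 2) q^-1) q)).
    apply: powR_ler_pos; [exact: ltW|exact: ltW|]; by rewrite /t ge_min lexx orbT.
  by rewrite -powRrM mulVf ?gt_eqF // powRr1 // ltW // divr_gt0.
have kt : k t < k (z / 2) by rewrite /k !ltrD2r; apply: Kf_incr.
have := klow t t0.
rewrite /del in del0 tq; lra.
Qed.

End Anal.
Section GenH.
Variable R : realType.
Variable q : R.
Hypothesis q0 : 0 < q.
Hypothesis q1 : q < 1.

Definition Kp (x y : R) := powR (x + y) q - powR x q - powR y q.

Fixpoint Dp (s : seq R) : R :=
  if s is x :: s' then \sum_(y <- s') Kp x y + Dp s' else 0.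

Definition Ep (s : seq R) : R :=
  powR (\sum_(x <- s) x) q - \sum_(x <- s) powR x q - Dp s.

Lemma Ep_merge x y r :
  Ep [:: x, y & r] = Ep ((x + y) :: r) +
     \sum_(t <- r) (Kp (x + y) t - Kp x t - Kp y t).
Proof.
rewrite /Ep /= !big_cons addrA.
rewrite !sumrB.
rewrite /Kp /=; ring.
Qed.

Lemma Ep_nil : Ep [::] = 0.
Proof. by rewrite /Ep /= !big_nil powR0 ?gt_eqF // !subr0. Qed.

Lemma Ep_1 x : Ep [:: x] = 0.
Proof. by rewrite /Ep /= !big_cons !big_nil !addr0 subrr subr0. Qed.

Lemma Ep_ge0 n s : (size s <= n)%N -> all (fun x => 0 < x) s ->
  0 <= Ep s /\ ((3 <= size s)%N -> 0 < Ep s).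
Proof.
elim: n s => [|n IH] s.
  by case: s => // _ _; rewrite Ep_nil lexx.
case: s => [|x [|y r]].
- by move=> _ _; rewrite Ep_nil lexx.
- by move=> _ _; rewrite Ep_1 lexx.
- move=> hs /and3P[x0 y0 hr].
  have hr' : all (fun x => 0 < x) ((x + y) :: r) by rewrite /= addr_gt0.
  have hs2 : (size ((x + y)%R :: r) <= n)%N by [].
  have [IH1 _] := IH ((x + y) :: r) hs2 hr'.
  have hS : 0 <= \sum_(t <- r) (Kp (x + y) t - Kp x t - Kp y t).
    rewrite big_seq; apply: sumr_ge0 => t tr.
    have t0 : 0 < t by move/allP: hr => /(_ t tr).
    have := @hlawka R q x y t q0 q1 x0 y0 t0; rewrite /Kp; lra.
  rewrite Ep_merge; split; first by rewrite addr_ge0.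
  clear hs2; case: r hr hs hr' IH1 hS => [//|t r] /= /andP[t0 hr] hs hr' IH1 hS _.
  rewrite big_cons.
  have := @hlawka R q x y t q0 q1 x0 y0 t0.
  have : 0 <= \sum_(j <- r) (Kp (x + y) j - Kp x j - Kp y j).
    rewrite big_seq; apply: sumr_ge0 => j jr.
    have j0 : 0 < j by move/allP: hr => /(_ j jr).
    have := @hlawka R q x y j q0 q1 x0 y0 j0; rewrite /Kp; lra.
  rewrite /Kp; lra.
Qed.

End GenH.
Arguments Kp {R}.
Arguments Dp {R}.
Arguments Ep {R}.
Section Comb.
Variable R : realType.
Variable q : R.
Hypothesis q0 : 0 < q.
Hypothesis q1 : q < 1.
Variable T : eqType.

Lemma dsum_le (G : T -> T -> R) (b : T -> R) (P : seq T) :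
  uniq P -> (forall y y', G y y' = G y' y) ->
  (forall y, y \in P -> G y y = powR (b y) q) ->
  (forall y y', y \in P -> y' \in P -> y != y' -> 2 * G y y' <= Kp q (b y) (b y')) ->
  \sum_(y <- P) \sum_(y' <- P) G y y' <= \sum_(y <- P) powR (b y) q + Dp q (map b P).
Proof.
move=> + Gs; elim: P => [|x P IH] /=; first by move=> *; rewrite !big_nil addr0.
move=> /andP[xP uP] hd hp.
have sub y : y \in P -> y \in x :: P by rewrite inE => ->; rewrite orbT.
have IH' := IH uP (fun y yP => hd y (sub y yP))
  (fun y y' yP y'P => hp y y' (sub y yP) (sub y' y'P)).
rewrite !big_cons big_map.
have e1 : \sum_(y <- P) \sum_(y' <- x :: P) G y y' =
   \sum_(y <- P) G x y + \sum_(y <- P) \sum_(y' <- P) G y y'.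
  rewrite -big_split /=; apply: eq_bigr => y _; by rewrite big_cons Gs.
rewrite e1 hd ?mem_head //.
have e2 : 2 * \sum_(y <- P) G x y <= \sum_(y <- P) Kp q (b x) (b y).
  rewrite mulr_sumr big_seq [X in _ <= X]big_seq; apply: ler_sum => y yP.
  apply: hp; rewrite ?mem_head ?inE ?yP ?orbT //.
  by apply/eqP => exy; rewrite exy yP in xP.
lra.
Qed.

Lemma two_of (p : pred T) (N : seq T) : uniq N -> (2 <= count p N)%N ->
  exists y1 y2, [/\ y1 \in N, y2 \in N, p y1, p y2 & y1 != y2].
Proof.
move=> uN; rewrite -size_filter.
have uF : uniq ([seq z <- N | p z]) by rewrite filter_uniq.
have mF y : y \in [seq z <- N | p z] -> (y \in N) && p y by rewrite mem_filter andbC.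
case: ([seq z <- N | p z]) uF mF => [|y1 [|y2 r]] //= /andP[y1n _] mF _.
have /andP[h1 h2] := mF y1 (mem_head _ _).
have /andP[h3 h4] : (y2 \in N) && p y2 by apply: mF; rewrite !inE eqxx orbT.
exists y1, y2; split => //; apply/eqP => e; rewrite e in y1n.
by rewrite inE eqxx in y1n.
Qed.

Lemma one_of (p : pred T) (N : seq T) : count p N = 1%N ->
  exists n, n \in N /\ p n /\ forall y, y \in N -> p y -> y = n.
Proof.
rewrite -size_filter.
have mF y : y \in [seq z <- N | p z] -> (y \in N) && p y by rewrite mem_filter andbC.
case E: ([seq z <- N | p z]) mF => [|n [|? ?]] //= mF _.
have /andP[h1 h2] := mF n (mem_head _ _).
exists n; split => //; split => // y yN py.
have : y \in [seq z <- N | p z] by rewrite mem_filter py yN.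
by rewrite E inE => /eqP.
Qed.

Lemma argmin_seq (b : T -> R) (N : seq T) : N != [::] ->
  exists2 i, i \in N & forall y, y \in N -> b i <= b y.
Proof.
elim: N => [//|x N IH] _.
have [->|NN] := eqVneq N [::].
  by exists x; rewrite ?mem_head // => y; rewrite inE => /eqP ->.
have [i iN hi] := IH NN.
have [bxi|bix] := lerP (b x) (b i).
  exists x; first exact: mem_head.
  move=> y; rewrite inE => /orP[/eqP->//|yN]; exact: le_trans (hi y yN).
exists i; first by rewrite inE iN orbT.
move=> y; rewrite inE => /orP[/eqP->|yN]; [exact: ltW | exact: hi].
Qed.

End Comb.
Section Comb2.
Variable R : realType.
Variable q : R.
Hypothesis q0 : 0 < q.
Hypothesis q1 : q < 1.
Variable T : eqType.
Variables (N : seq T) (f : T -> R) (G : T -> T -> R).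
Hypothesis uN : uniq N.
Hypothesis fnz : forall y, y \in N -> f y != 0.
Hypothesis fsum : \sum_(y <- N) f y = 0.
Hypothesis Gs : forall y y', G y y' = G y' y.
Hypothesis Grow : forall y, y \in N -> \sum_(y' <- N) G y y' = 0.
Hypothesis Gd : forall y, y \in N -> G y y = powR `|f y| q.
Hypothesis Gp : forall y y', y \in N -> y' \in N -> y != y' ->
  G y y + G y' y' + 2 * G y y' <= powR `|f y + f y'| q.

Lemma caseA n : n \in N -> f n < 0 -> (forall y, y \in N -> y != n -> 0 < f y) ->
  (4 <= size N)%N -> False.
Proof.
move=> nN fn0 fpos sN.
set P := rem n N.
have uP : uniq P by exact: rem_uniq.
have memP y : y \in P -> (y != n) && (y \in N).
  by rewrite /P (mem_rem_uniq _ uN) inE.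
have sumN (F : T -> R) : \sum_(y <- N) F y = F n + \sum_(y <- P) F y.
  by rewrite (big_rem n nN).
have fpP y : y \in P -> 0 < f y by move/memP/andP=> [h1 h2]; apply: fpos.
have fn : `|f n| = \sum_(y <- P) `|f y|.
  rewrite ltr0_norm //; move: fsum; rewrite sumN => h.
  rewrite big_seq (eq_bigr f) -?big_seq; first lra.
  by move=> y yP; rewrite gtr0_norm // fpP.
have Gnn : G n n = \sum_(y <- P) \sum_(y' <- P) G y y'.
  have := Grow n nN; rewrite sumN => h1.
  rewrite big_seq (eq_bigr (fun y => - G n y)) -?big_seq.
    rewrite sumrN; lra.
  move=> y yP; have /andP[_ yN] := memP y yP.
  have := Grow y yN; rewrite sumN (Gs y n) => h2; lra.
have hle := @dsum_le R q T G (fun y => `|f y|) P uP Gs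
  (fun y yP => Gd y (proj2 (andP (memP y yP)))).
have : \sum_(y <- P) \sum_(y' <- P) G y y' <=
   \sum_(y <- P) powR `|f y| q + Dp q (map (fun y => `|f y|) P).
  apply: hle => y y' yP y'P yy.
  have /andP[_ yN] := memP y yP; have /andP[_ y'N] := memP y' y'P.
  have := Gp y y' yN y'N yy; rewrite (Gd y yN) (Gd y' y'N) /Kp.
  rewrite (@gtr0_norm _ (f y + f y')) ?addr_gt0 ?fpP // (gtr0_norm (fpP y yP)) (gtr0_norm (fpP y' y'P)).
  lra.
rewrite -Gnn (Gd n nN) fn => h.
have hsz : (size (map (fun y => `|f y|%R) P) <= size P)%N by rewrite size_map.
have hall : all (fun x => 0 < x) (map (fun y => `|f y|) P).
  apply/allP => x /mapP[y yP ->]; by rewrite normr_gt0 gt_eqF ?fpP.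
have [_ hE] := @Ep_ge0 R q q0 q1 (size P) (map (fun y => `|f y|) P) hsz hall.
have : 0 < Ep q [seq `|f y| | y <- P].
  apply: hE; rewrite size_map /P size_rem //.
  by move: sN; case: (size N) => // k; rewrite succnK.
rewrite /Ep !big_map; lra.
Qed.


Lemma opp_abs (a c : R) : a * c < 0 -> `|a| <= `|c| -> `|a + c| < `|c|.
Proof.
move=> ac h.
have [a0|a0] := ltrP 0 a.
  have c0 : c < 0 by move: ac; rewrite pmulr_rlt0.
  move: h; rewrite (gtr0_norm a0) (ltr0_norm c0) => h.
  rewrite ler0_norm; lra.
have [c0|c0] := ltrP 0 c.
  have a0' : a < 0 by move: ac; rewrite pmulr_llt0.
  move: h; rewrite (ltr0_norm a0') (gtr0_norm c0) => h.
  rewrite ger0_norm; lra.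
have : 0 <= a * c by rewrite mulr_le0.
lra.
Qed.

Lemma caseB i0 y1 y2 : i0 \in N -> (forall y, y \in N -> `|f i0| <= `|f y|) ->
  y1 \in N -> y2 \in N -> y1 != y2 -> f y1 * f i0 < 0 -> f y2 * f i0 < 0 -> False.
Proof.
move=> iN imin y1N y2N y12 s1 s2.
have b0 : 0 < `|f i0| by rewrite normr_gt0 fnz.
set B0 := powR `|f i0| q.
have B00 : 0 < B0 by rewrite powR_gt0.
pose v y := powR `|f y| q + B0 - powR `|f i0 + f y| q.
have vge y : 0 <= v y.
  rewrite /v subr_ge0; apply: (le_trans (y := powR (`|f i0| + `|f y|) q)).
    apply: powR_ler_pos; [exact: ltW|exact: normr_ge0|exact: ler_normD].
  rewrite [X in _ <= X]addrC /B0; apply: powR_subadd; rewrite ?normr_ge0 //; exact: ltW.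
have vopp y : y \in N -> f y * f i0 < 0 -> B0 < v y.
  move=> yN sy; rewrite /v.
  suff : powR `|f i0 + f y| q < powR `|f y| q by lra.
  apply: powR_ltr_pos => //.
  apply: opp_abs; [by rewrite mulrC| exact: imin].
have neq y : f y * f i0 < 0 -> y != i0.
  by move=> h; apply/eqP => e; move: h; rewrite e -expr2 ltNge sqr_ge0.
have vle y : y \in N -> y != i0 -> v y <= - 2 * G i0 y.
  move=> yN yi; have iy : i0 != y by rewrite eq_sym.
  have := Gp i0 y iN yN iy; rewrite /v (Gd i0 iN) (Gd y yN).
  rewrite -/B0; lra.
have sumG : \sum_(y <- N | y != i0) G i0 y = - B0.
  have := Grow i0 iN; rewrite (bigD1_seq i0 iN uN) /= (Gd i0 iN) -/B0; lra.
have up : \sum_(y <- N | y != i0) v y <= 2 * B0.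
  apply: (le_trans (y := \sum_(y <- N | y != i0) (- 2 * G i0 y))).
    rewrite big_seq_cond [X in _ <= X]big_seq_cond; apply: ler_sum => y /andP[yN yi].
    exact: vle.
  rewrite -mulr_sumr sumG; lra.
have low : v y1 + v y2 <= \sum_(y <- N | y != i0) v y.
  rewrite (big_rem y1 y1N) neq //.
  have y2r : y2 \in rem y1 N by rewrite (mem_rem_uniq _ uN) inE eq_sym y12 y2N.
  rewrite (big_rem y2 y2r) neq //.
  have : 0 <= \sum_(y <- rem y2 (rem y1 N) | y != i0) v y.
    by apply: sumr_ge0 => y _; exact: vge.
  rewrite /=; lra.
have := vopp y1 y1N s1; have := vopp y2 y2N s2; lra.
Qed.

End Comb2.
Section Key.
Variable R : realType.
Variable q : R.
Hypothesis q0 : 0 < q.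
Hypothesis q1 : q < 1.
Variable T : eqType.
Variables (N : seq T) (f : T -> R) (G : T -> T -> R).
Hypothesis uN : uniq N.
Hypothesis fnz : forall y, y \in N -> f y != 0.
Hypothesis fsum : \sum_(y <- N) f y = 0.
Hypothesis Gs : forall y y', G y y' = G y' y.
Hypothesis Grow : forall y, y \in N -> \sum_(y' <- N) G y y' = 0.
Hypothesis Gd : forall y, y \in N -> G y y = powR `|f y| q.
Hypothesis Gp : forall y y', y \in N -> y' \in N -> y != y' ->
  G y y + G y' y' + 2 * G y y' <= powR `|f y + f y'| q.

Lemma not_all_pos : N != [::] -> (forall y, y \in N -> 0 < f y) -> False.
Proof.
case E: N => [//|x s] _ hp.
have xN : x \in N by rewrite E mem_head.
move: fsum; rewrite (big_rem x xN) /=.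
have : 0 <= \sum_(y <- rem x N) f y.
  rewrite big_seq; apply: sumr_ge0 => y ys; apply/ltW/hp.
  by rewrite -E; apply: (mem_rem ys).
have := hp x (mem_head _ _); lra.
Qed.

Lemma not_all_neg : N != [::] -> (forall y, y \in N -> f y < 0) -> False.
Proof.
case E: N => [//|x s] _ hp.
have xN : x \in N by rewrite E mem_head.
move: fsum; rewrite (big_rem x xN) /=.
have : \sum_(y <- rem x N) f y <= 0.
  rewrite big_seq; apply: sumr_le0 => y ys; apply/ltW/hp.
  by rewrite -E; apply: (mem_rem ys).
have := hp x (mem_head _ _); lra.
Qed.

Lemma key : (4 <= size N)%N -> False.
Proof.
move=> sN.
have Nn : N != [::] by case: N sN.
have fsumN : \sum_(y <- N) - f y = 0 by rewrite sumrN fsum oppr0.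
have GdN y : y \in N -> G y y = powR `|- f y| q by move=> yN; rewrite normrN Gd.
have GpN y y' : y \in N -> y' \in N -> y != y' ->
    G y y + G y' y' + 2 * G y y' <= powR `|- f y + - f y'| q.
  by move=> *; rewrite -opprD normrN Gp.
have [cn2|cn1] := leqP 2 (count (fun y => f y < 0) N).
  have [cp2|cp1] := leqP 2 (count (fun y => 0 < f y) N).
    have [i0 iN imin] := @argmin_seq R T (fun y => `|f y|) N Nn.
    have [fi|fi] := ltrP 0 (f i0).
      have [y1 [y2 [y1N y2N s1 s2 y12]]] := @two_of T _ N uN cn2.
      apply: (@caseB R q q0 q1 T N f G uN fnz Grow Gd Gp i0 y1 y2) => //.
        by rewrite pmulr_llt0.
      by rewrite pmulr_llt0.
    have fi' : f i0 < 0 by rewrite lt_neqAle fnz.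
    have [y1 [y2 [y1N y2N s1 s2 y12]]] := @two_of T _ N uN cp2.
    apply: (@caseB R q q0 q1 T N f G uN fnz Grow Gd Gp i0 y1 y2) => //.
      by rewrite nmulr_llt0.
    by rewrite nmulr_llt0.
  move: cp1; rewrite ltnS leq_eqVlt ltnS leqn0 => /orP[/eqP c1|/eqP c0].
    have [n [nN [pn hn]]] := @one_of T _ N c1.
    apply: (@caseA R q q0 q1 T N (fun y => - f y) G uN fsumN Gs Grow GdN GpN n nN) => //.
      by rewrite oppr_lt0.
    move=> y yN yn; rewrite oppr_gt0 lt_neqAle fnz //=.
    by rewrite leNgt; apply/negP => h; move: yn; rewrite (hn y yN h) eqxx.
  apply: not_all_neg => // y yN.
  have : ~~ (0 < f y).
    apply/negP => h; move/eqP: c0; apply/negP; rewrite -lt0n -has_count.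
    by apply/hasP; exists y.
  by rewrite -leNgt le_eqVlt (negbTE (fnz y yN)).
move: cn1; rewrite ltnS leq_eqVlt ltnS leqn0 => /orP[/eqP c1|/eqP c0].
  have [n [nN [pn hn]]] := @one_of T _ N c1.
  apply: (@caseA R q q0 q1 T N f G uN fsum Gs Grow Gd Gp n nN) => //.
  move=> y yN yn; rewrite lt_def fnz //=.
  rewrite leNgt; by apply: contraNN yn => h; apply/eqP/hn.
apply: not_all_pos => // y yN.
have : ~~ (f y < 0).
  apply/negP => h; move/eqP: c0; apply/negP; rewrite -lt0n -has_count.
  by apply/hasP; exists y.
by rewrite -leNgt le_eqVlt eq_sym (negbTE (fnz y yN)).
Qed.

End Key.
Section Geo.
Variable R : realType.
Variable d : nat.
Local Notation vec := 'rV[R]_d.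

Definition dot (u v : vec) : R := \sum_(i < d) u ord0 i * v ord0 i.
Definition nrm2 (u : vec) : R := dot u u.

Lemma dotC u v : dot u v = dot v u.
Proof. by apply: eq_bigr => i _; rewrite mulrC. Qed.

Lemma dotDl u v w : dot (u + v) w = dot u w + dot v w.
Proof. by rewrite /dot -big_split; apply: eq_bigr => i _; rewrite mxE mulrDl. Qed.

Lemma dotNl u v : dot (- u) v = - dot u v.
Proof. by rewrite /dot -sumrN; apply: eq_bigr => i _; rewrite mxE mulNr. Qed.

Lemma dotBl u v w : dot (u - v) w = dot u w - dot v w.
Proof. by rewrite dotDl dotNl. Qed.

Lemma dotZl a u v : dot (a *: u) v = a * dot u v.
Proof. by rewrite /dot mulr_sumr; apply: eq_bigr => i _; rewrite mxE mulrA. Qed.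

Lemma dotDr u v w : dot w (u + v) = dot w u + dot w v.
Proof. by rewrite dotC dotDl !(dotC w). Qed.

Lemma dotBr u v w : dot w (u - v) = dot w u - dot w v.
Proof. by rewrite dotC dotBl !(dotC w). Qed.

Lemma dotZr a u v : dot v (a *: u) = a * dot v u.
Proof. by rewrite dotC dotZl dotC. Qed.

Lemma dot0l v : dot 0 v = 0.
Proof. by rewrite /dot big1 // => i _; rewrite mxE mul0r. Qed.

Lemma dot0r v : dot v 0 = 0.
Proof. by rewrite dotC dot0l. Qed.

Lemma dot_suml (T : Type) (J : seq T) (U : T -> vec) v :
  dot (\sum_(y <- J) U y) v = \sum_(y <- J) dot (U y) v.
Proof.
elim: J => [|x J IH]; first by rewrite !big_nil dot0l.
by rewrite !big_cons dotDl IH.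
Qed.

Lemma nrm2_ge0 u : 0 <= nrm2 u.
Proof. by apply: sumr_ge0 => i _; rewrite -expr2 sqr_ge0. Qed.

Lemma nrm2_eq0 u : nrm2 u = 0 -> u = 0.
Proof.
move=> h; apply/matrixP => i j; rewrite [RHS]mxE (ord1 i).
have hs : \sum_(k < d) u ord0 k ^+ 2 = 0.
  by rewrite -[RHS]h /nrm2 /dot; apply: eq_bigr => k _; rewrite expr2.
have := @psumr_eq0P R _ predT (fun k => u ord0 k ^+ 2) (fun k _ => sqr_ge0 _) hs j isT.
by move/eqP; rewrite sqrf_eq0 => /eqP.
Qed.

Lemma edistE (x y : vec) : edist x y = Num.sqrt (nrm2 (x - y)).
Proof.
by rewrite /edist /nrm2 /dot; congr Num.sqrt; apply: eq_bigr => i _; rewrite !mxE expr2.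
Qed.

Lemma edistC (x y : vec) : edist x y = edist y x.
Proof.
by rewrite !edistE /nrm2 -opprB dotNl dotC dotNl opprK.
Qed.

Lemma edist_gt0 (x y : vec) : x != y -> 0 < edist x y.
Proof.
move=> xy; rewrite edistE sqrtr_gt0 lt_def nrm2_ge0 andbT.
by apply/eqP => /nrm2_eq0 /eqP; rewrite subr_eq0; apply/negP.
Qed.

Lemma edist_ge0 (x y : vec) : 0 <= edist x y.
Proof. by rewrite edistE sqrtr_ge0. Qed.

Lemma edistxx (x : vec) : edist x x = 0.
Proof. by rewrite edistE subrr /nrm2 dot0l sqrtr0. Qed.

Lemma edist_pert (z y v : vec) (e : R) : nrm2 v = 1 -> z != y ->
  edist (z + e *: v) y <=
  edist z y - e * dot (y - z) v / edist z y + e ^+ 2 / edist z y.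
Proof.
move=> v1 zy.
set A := edist z y.
have A0 : 0 < A by exact: edist_gt0.
set B := dot (y - z) v.
have hA2 : nrm2 (y - z) = A ^+ 2.
  by rewrite /A edistC edistE sqr_sqrtr // nrm2_ge0.
have hX : nrm2 (z + e *: v - y) = A ^+ 2 - 2 * e * B + e ^+ 2.
  have -> : z + e *: v - y = e *: v - (y - z).
    by apply/matrixP => i j; rewrite !mxE; lra.
  have hA2' : A ^+ 2 = dot y y - dot y z - (dot z y - dot z z).
    by rewrite -hA2 /nrm2 !(dotBl, dotBr).
  have hB : B = dot y v - dot z v by rewrite /B dotBl.
  have v1' : dot v v = 1 by exact: v1.
  rewrite /nrm2 !(dotBl, dotBr, dotZl, dotZr) hA2' hB v1' (dotC v y) (dotC v z).
  ring.
rewrite edistE hX.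
set Y := A - e * B / A + e ^+ 2 / A.
have hY : Y = (A ^+ 2 - e * B + e ^+ 2) / A.
  rewrite /Y; field; exact: lt0r_neq0.
have X0 : 0 <= A ^+ 2 - 2 * e * B + e ^+ 2 by rewrite -hX nrm2_ge0.
have Y0 : 0 <= Y.
  rewrite hY; apply: divr_ge0; last exact: ltW.
  have := sqr_ge0 A; have := sqr_ge0 e; lra.
rewrite -(ger0_norm Y0) -sqrtr_sqr ler_sqrt ?sqr_ge0 //.
rewrite hY expr_div_n ler_pdivlMr ?exprn_gt0 //.
have : 0 <= e ^+ 2 * ((e - B) ^+ 2 + A ^+ 2).
  by rewrite mulr_ge0 ?sqr_ge0 // addr_ge0 ?sqr_ge0.
set K := _ * _; move=> K0.
have -> : (A ^+ 2 - e * B + e ^+ 2) ^+ 2 = (A ^+ 2 - 2 * e * B + e ^+ 2) * A ^+ 2 + K.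
  by rewrite /K; ring.
by rewrite lerDl.
Qed.

End Geo.
Arguments dot {R d}.
Arguments nrm2 {R d}.
Section SeqH.
Variable R : realType.
Variable T : eqType.

Lemma sum_if_eq (V : seq T) z (g : T -> R) : uniq V -> z \in V ->
  \sum_(y <- V) (if y == z then g y else 0) = g z.
Proof.
move=> uV zV; rewrite (big_rem z zV) /= eqxx big1_seq ?addr0 // => y /andP[_ yr].
case: eqP => // e; move: yr; rewrite e (mem_rem_uniq _ uV) inE eqxx //.
Qed.

Lemma sum_if_in (V J : seq T) (g : T -> R) : uniq V -> uniq J -> {subset J <= V} ->
  \sum_(y <- V) (if y \in J then g y else 0) = \sum_(y <- J) g y.
Proof.
move=> uV uJ JV; rewrite -big_mkcond -big_filter; apply: perm_big.
apply: uniq_perm; first by rewrite filter_uniq.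
  exact: uJ.
move=> y; rewrite mem_filter; apply/idP/idP => [/andP[]//|yJ].
by rewrite yJ JV.
Qed.

Lemma pos_min (L : seq R) : exists2 m, 0 < m & forall t, t \in L -> 0 < t -> m <= t.
Proof.
elim: L => [|x L [m m0 hm]]; first by exists 1.
have [x0|x0] := ltrP 0 x.
  exists (Num.min x m); first by rewrite lt_min x0 m0.
  move=> t; rewrite inE => /orP[/eqP->|tL] t0; first by rewrite ge_min lexx.
  by rewrite ge_min hm ?orbT.
exists m => // t; rewrite inE => /orP[/eqP->|tL] t0; last exact: hm.
by move: (lt_le_trans t0 x0); rewrite ltxx.
Qed.

End SeqH.
Section Pert.
Variable R : realType.
Variable d : nat.
Local Notation vec := 'rV[R]_d.
Variable p : R.
Hypothesis p0 : 0 < p.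
Variables (mup mum : vec -> R) (F : flow R d).
Hypothesis hF : is_flow mup mum F.
Variable z : vec.
Hypothesis zV : z \in fV F.
Variable J : seq vec.
Hypothesis uJ : uniq J.
Hypothesis hJ : forall y, y \in J -> fm F z y != 0.
Variable zp : vec.
Hypothesis zpV : zp \notin fV F.

Local Notation V := (fV F).
Local Notation m := (fm F).

Lemma m_anti x y : m x y = - m y x.
Proof. by case: hF => _ _ h _ _; apply: h. Qed.

Lemma m_xx x : m x x = 0.
Proof. by have := m_anti x x; move/eqP; rewrite -addr_eq0 -mulr2n mulrn_eq0 /= => /eqP. Qed.

Lemma uV : uniq V.
Proof. by case: hF. Qed.

Lemma JV y : y \in J -> y \in V.
Proof. by move=> yJ; case: hF => _ _ _ h _; have /andP[] := h _ _ (hJ _ yJ). Qed.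

Lemma zJ : z \notin J.
Proof. by apply/negP => /hJ; rewrite m_xx eqxx. Qed.

Lemma zpz : zp != z.
Proof. by apply/eqP => e; move: zpV; rewrite e zV. Qed.

Lemma zpJ y : y \in J -> y != zp.
Proof. by move=> /JV yV; apply/eqP => e; move: zpV; rewrite -e yV. Qed.

Local Notation FJ := (\sum_(y <- J) fm F z y).

Definition hJf y := if y == z then - FJ else if y \in J then m z y else 0.

Definition mp x y :=
  if x == zp then (if y == zp then 0 else hJf y)
  else if y == zp then - hJf x
  else if (x == z) && (y \in J) then 0
  else if (y == z) && (x \in J) then 0
  else m x y.

Definition Gf := Flow (zp :: V) mp.

Lemma mp_anti x y : mp x y = - mp y x.
Proof.
rewrite /mp; case: (eqVneq x zp) => [_|xz]; case: (eqVneq y zp) => [_|yz] /=.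
- by rewrite oppr0.
- by rewrite opprK.
- by [].
case: (eqVneq x z) => [ez|xz']; case: (eqVneq y z) => [ez'|yz'] /=;
  by case: (x \in J); case: (y \in J); rewrite /= ?oppr0 // m_anti.
Qed.

Lemma sum_m_J w : \sum_(x <- J) m x w = - \sum_(x <- J) m w x.
Proof. by rewrite -sumrN; apply: eq_bigr => x _; rewrite m_anti. Qed.

Lemma Gf_flow : is_flow mup mum Gf.
Proof.
case: hF => hu hs ha he hc.
split => /=.
- by rewrite zpV hu.
- by move=> x /hs xV; rewrite inE xV orbT.
- exact: mp_anti.
- move=> x y; rewrite /mp /hJf !inE.
  case: (eqVneq x zp) => [_|xz] /=.
    case: (eqVneq y zp) => [_|yz]; first by rewrite eqxx.
    case: (eqVneq y z) => [->|yz']; first by rewrite zV orbT.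
    by case: ifP => [/JV -> _|]; [rewrite orbT | rewrite eqxx].
  case: (eqVneq y zp) => [_|yz] /=.
    case: (eqVneq x z) => [->|xz']; first by rewrite zV.
    by case: ifP => [/JV -> _|]; [rewrite ?orbT | rewrite oppr0 eqxx].
  case: ifP => [_|_]; first by rewrite eqxx.
  case: ifP => [_|_]; first by rewrite eqxx.
  by move/he => /andP[-> ->].
- move=> w; rewrite big_cons.
  case: (eqVneq w zp) => [->|wz].
    have -> : mup zp - mum zp = 0.
      by apply/eqP; apply/negPn/negP => /hs; rewrite (negbTE zpV).
    rewrite /mp eqxx /= add0r.
    rewrite big_seq (eq_bigr (fun x => - hJf x)) -?big_seq; last first.
      by move=> x xV; have -> : (x == zp) = false by apply/negbTE; apply/eqP => e; move: zpV; rewrite -e xV.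
    rewrite sumrN /hJf.
    have -> : \sum_(i <- V) (if i == z then - FJ else if i \in J then m z i else 0) =
      \sum_(i <- V) ((if i == z then - FJ else 0) + (if i \in J then m z i else 0)).
      apply: eq_bigr => i _; case: (eqVneq i z) => [->|]; first by rewrite (negbTE zJ) addr0.
      by rewrite add0r.
    rewrite big_split /= sum_if_eq // ?uV // sum_if_in //; last exact: JV.
    by rewrite addNr oppr0.
  rewrite hc.
  have e1 : mp zp w = hJf w by rewrite /mp eqxx (negbTE wz).
  have e2 x : x \in V -> mp x w =
     m x w - (if x == z then (if w \in J then m x w else 0) else 0)
           - (if w == z then (if x \in J then m x w else 0) else 0).
    move=> xV; have xz : (x == zp) = false.
      by apply/negbTE; apply/eqP => e; move: zpV; rewrite -e xV.
    rewrite /mp xz (negbTE wz).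
    case: (eqVneq x z) => [ex|xz']; case: (eqVneq w z) => [ew|wz'] /=.
    - by rewrite ex ew (negbTE zJ) !subr0.
    - by case: (w \in J); rewrite ?subr0 ?subrr.
    - by case: (x \in J); rewrite ?subr0 ?subrr.
    - by rewrite !subr0.
  have e3 : \sum_(j <- V) mp j w = \sum_(j <- V) (m j w
       - (if j == z then (if w \in J then m j w else 0) else 0)
       - (if w == z then (if j \in J then m j w else 0) else 0)).
    by rewrite big_seq [RHS]big_seq; apply: eq_bigr => x xV; exact: e2 x xV.
  rewrite e1 e3 !sumrB.
  rewrite sum_if_eq ?uV // ?zV //.
  case: (eqVneq w z) => [ew|wz'].
    have h := @sum_if_in R _ V J (fun i => m i z) uV uJ JV.
    rewrite ew /hJf eqxx (negbTE zJ) subr0.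
    rewrite h sum_m_J; ring.
  rewrite big1_eq subr0 /hJf (negbTE wz'); case: (w \in J) => /=; ring.
Qed.


Lemma sum_if_b (T : Type) (s : seq T) (b : bool) (g : T -> R) :
  \sum_(y <- s) (if b then g y else 0) = if b then \sum_(y <- s) g y else 0.
Proof. by case: b => //; rewrite big1_eq. Qed.

Lemma xV_zp x : x \in V -> (x == zp) = false.
Proof. by move=> xV; apply/negbTE; apply/eqP => e; move: zpV; rewrite -e xV. Qed.

Lemma cost_Gf : gilbert_cost p Gf = gilbert_cost p F
  - \sum_(y <- J) powR `|m z y| p * edist z y
  + (powR `|FJ| p * edist zp z + \sum_(y <- J) powR `|m z y| p * edist zp y).
Proof.
rewrite /gilbert_cost /= big_cons.
set S1 := \sum_(y <- V) powR `|mp zp y| p * edist zp y.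
have hS1 : S1 = powR `|FJ| p * edist zp z + \sum_(y <- J) powR `|m z y| p * edist zp y.
  rewrite /S1 big_seq (eq_bigr (fun y =>
     (if y == z then powR `|FJ| p * edist zp z else 0) +
     (if y \in J then powR `|m z y| p * edist zp y else 0))) -?big_seq.
    rewrite big_split /= sum_if_eq ?uV // sum_if_in ?uV //; exact: JV.
  move=> y yV; rewrite /mp eqxx (xV_zp y yV) /hJf.
  case: (eqVneq y z) => [->|yz].
    by rewrite (negbTE zJ) normrN addr0.
  case: (y \in J); rewrite add0r //.
  by rewrite normr0 powR0 ?gt_eqF // mul0r.
have hrow : \sum_(y <- zp :: V) powR `|mp zp y| p * edist zp y = S1.
  have e : mp zp zp = 0 by rewrite /mp eqxx.
  by rewrite big_cons e normr0 powR0 ?gt_eqF // mul0r add0r.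
have hcol : \sum_(x <- V) powR `|mp x zp| p * edist x zp = S1.
  rewrite /S1 big_seq [RHS]big_seq; apply: eq_bigr => x xV.
  by rewrite (mp_anti x zp) normrN edistC.
have hin x y : x \in V -> y \in V -> powR `|mp x y| p * edist x y =
   powR `|m x y| p * edist x y
   - (if x == z then (if y \in J then powR `|m x y| p * edist x y else 0) else 0)
   - (if y == z then (if x \in J then powR `|m x y| p * edist x y else 0) else 0).
  move=> xV yV; rewrite /mp (xV_zp x xV) (xV_zp y yV).
  have e0 : powR `|0 : R| p * edist x y = 0 by rewrite normr0 powR0 ?gt_eqF // mul0r.
  case: (eqVneq x z) => [ex|xz]; case: (eqVneq y z) => [ey|yz] /=.
  - by rewrite ex ey (negbTE zJ) !subr0.
  - by case: (y \in J); rewrite ?e0 ?subr0 ?subrr.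
  - by case: (x \in J); rewrite ?e0 ?subr0 ?subrr.
  - by rewrite !subr0.
have hinner : \sum_(x <- V) \sum_(y <- V) powR `|mp x y| p * edist x y =
   \sum_(x <- V) \sum_(y <- V) powR `|m x y| p * edist x y
   - 2 * \sum_(y <- J) powR `|m z y| p * edist z y.
  rewrite big_seq (eq_bigr (fun x =>
     \sum_(y <- V) powR `|m x y| p * edist x y
     - (if x == z then \sum_(y <- V) (if y \in J then powR `|m x y| p * edist x y else 0) else 0)
     - (if x \in J then powR `|m x z| p * edist x z else 0))) -?big_seq; last first.
    move=> x xV; rewrite big_seq (eq_bigr _ (fun y yV => hin x y xV yV)) -big_seq !sumrB.
    by rewrite sum_if_b sum_if_eq ?uV.
  rewrite !sumrB sum_if_eq ?uV // (@sum_if_in R _ V J (fun y => powR `|m z y| p * edist z y)) ?uV //; last exact: JV.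
  rewrite (@sum_if_in R _ V J (fun x => powR `|m x z| p * edist x z)) ?uV //; last exact: JV.
  have -> : \sum_(x <- J) powR `|m x z| p * edist x z = \sum_(y <- J) powR `|m z y| p * edist z y.
    by apply: eq_bigr => x _; rewrite m_anti normrN edistC.
  ring.
have hsplit : \sum_(x <- V) \sum_(y <- zp :: V) powR `|mp x y| p * edist x y =
   \sum_(x <- V) powR `|mp x zp| p * edist x zp +
   \sum_(x <- V) \sum_(y <- V) powR `|mp x y| p * edist x y.
  by rewrite -big_split /=; apply: eq_bigr => x _; rewrite big_cons.
rewrite hrow hsplit hcol hinner hS1.
set T0 := \sum_(x <- V) _.
by field.
Qed.

End Pert.
Section Pert2.
Variable R : realType.
Variable d : nat.
Local Notation vec := 'rV[R]_d.
Variable p : R.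
Hypothesis p0 : 0 < p.

Lemma perturb (mup mum : vec -> R) (F : flow R d) :
  is_flow mup mum F ->
  (forall G, is_flow mup mum G -> gilbert_cost p F <= gilbert_cost p G) ->
  forall z, z \in fV F -> forall J : seq vec, uniq J ->
  (forall y, y \in J -> fm F z y != 0) ->
  Num.sqrt (nrm2 (\sum_(y <- J) (powR `|fm F z y| p / edist z y) *: (y - z)))
   <= powR `|\sum_(y <- J) fm F z y| p.
Proof.
move=> hF opt z zV J uJ hJ.
set W := \sum_(y <- J) _.
set FJ := \sum_(y <- J) fm F z y.
set nW := Num.sqrt (nrm2 W).
rewrite leNgt; apply/negP => hlt.
have zJ : z \notin J by exact: (@zJ R d mup mum F hF z J hJ).
have yz y : y \in J -> z != y by move=> yJ; apply/eqP => e; move: zJ; rewrite e yJ.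
have nW0 : 0 < nW by apply: le_lt_trans hlt; exact: powR_ge0.
have hW2 : nrm2 W = nW ^+ 2 by rewrite /nW sqr_sqrtr // nrm2_ge0.
set v := nW^-1 *: W.
have v1 : nrm2 v = 1.
  rewrite /nrm2 /v dotZl dotZr -/(nrm2 W) hW2; field; exact: lt0r_neq0.
have dWv : dot W v = nW.
  rewrite /v dotZr -/(nrm2 W) hW2; field; exact: lt0r_neq0.
set del := nW - powR `|FJ| p.
have del0 : 0 < del by rewrite /del subr_gt0.
set C := \sum_(y <- J) powR `|fm F z y| p / edist z y.
have C0 : 0 <= C.
  rewrite /C big_seq; apply: sumr_ge0 => y yJ.
  by rewrite divr_ge0 ?powR_ge0 ?edist_ge0.
have [m0 m00 hm0] := @pos_min R [seq dot (x - z) v | x <- fV F].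
set e := Num.min (del / (C + 1)) m0 / 2.
have C10 : 0 < C + 1 by lra.
have e0 : 0 < e by rewrite /e divr_gt0 // lt_min m00 divr_gt0.
have em0 : e < m0.
  have : Num.min (del / (C + 1)) m0 <= m0 by rewrite ge_min lexx orbT.
  rewrite /e; lra.
have eC : e * C < del.
  have h1 : Num.min (del / (C + 1)) m0 <= del / (C + 1) by rewrite ge_min lexx.
  have h2 : e * (C + 1) <= del / 2.
    rewrite /e -mulrA (mulrC (2^-1)) mulrA ler_pdivrMr // -[X in _ <= X]mulrA.
    rewrite (mulrC 2^-1) mulrA -ler_pdivlMr ?invr_gt0 //.
    by rewrite mulrK; [exact: h1| exact: unitf_gt0].
  have : e * C <= e * (C + 1) by rewrite ler_pM2l // lerDl.
  lra.
set zp := z + e *: v.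
have zpV : zp \notin fV F.
  apply/negP => zpV.
  have h : dot (zp - z) v \in [seq dot (x - z) v | x <- fV F] by apply: map_f.
  have ee : dot (zp - z) v = e.
    have -> : zp - z = e *: v by apply/matrixP => i j; rewrite !mxE; lra.
    by rewrite dotZl (v1 : dot v v = 1) mulr1.
  rewrite ee in h; have := hm0 e h e0; lra.
have hG := @Gf_flow R d mup mum F hF z zV J uJ hJ zp zpV.
have := opt _ hG; rewrite (@cost_Gf R d p p0 mup mum F hF z zV J uJ hJ zp zpV) -/FJ.
have ezp : edist zp z = e.
  rewrite edistE.
  have -> : zp - z = e *: v by apply/matrixP => i j; rewrite !mxE; lra.
  rewrite /nrm2 dotZl dotZr (v1 : dot v v = 1) mulr1.
  by rewrite -expr2 sqrtr_sqr ger0_norm // ltW.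
rewrite ezp.
have hb : \sum_(y <- J) powR `|fm F z y| p * edist zp y <=
   \sum_(y <- J) powR `|fm F z y| p * edist z y - e * nW + e ^+ 2 * C.
  rewrite -dWv /W dot_suml /C !mulr_sumr -sumrN -!big_split /=.
  rewrite big_seq [X in _ <= X]big_seq; apply: ler_sum => y yJ.
  have hp := @edist_pert R d z y v e v1 (yz y yJ).
  have A0 : 0 < edist z y by apply: edist_gt0; exact: yz.
  rewrite dotZl.
  have a0 : 0 <= powR `|fm F z y| p by exact: powR_ge0.
  apply: (le_trans (ler_wpM2l a0 hp)).
  set a := powR _ p; set A := edist z y; set B := dot (y - z) v.
  have -> : a * (A - e * B / A + e ^+ 2 / A) = a * A - e * (a / A * B) + e ^+ 2 * (a / A).
    by field; exact: lt0r_neq0.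
  by rewrite lexx.
move=> hc.
have : 0 <= e * (e * C - del).
  rewrite /del; nra.
rewrite pmulr_rge0 //; lra.
Qed.

End Pert2.
Theorem corollary1 (R : realType) (d : nat) (p : R) :
  (2 <= d)%N -> 0 < p -> p < 2^-1 ->
  forall (S : seq (point R d)) (mup mum : point R d -> R),
    fin_measure_on S mup -> fin_measure_on S mum ->
    uniq S -> \sum_(x <- S) mup x = \sum_(x <- S) mum x ->
  forall F : flow R d, gilbert_steiner_solution p mup mum F ->
  forall z : point R d, branching_point mup mum F z ->
    vdeg F z != 0%N -> vdeg F z != 2%N -> vdeg F z = 3%N.
Proof.
move=> _ p0 p12 S mup mum _ _ _ _ F [hF opt] z [zV [mz1 mz2]] v0 v2.
set N := [seq w <- fV F | fm F z w != 0].
have hN : vdeg F z = size N by rewrite /vdeg size_filter.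
set q := p * 2.
have q0 : 0 < q by rewrite /q mulr_gt0.
have q1 : q < 1 by rewrite /q; lra.
have uN : uniq N by rewrite filter_uniq //; case: hF.
have memN y : y \in N -> (y \in fV F) && (fm F z y != 0) by rewrite mem_filter andbC.
have fnz y : y \in N -> fm F z y != 0 by move/memN/andP=> [].
have NV y : y \in N -> y \in fV F by move/memN/andP=> [].
have mxx x : fm F x x = 0.
  case: hF => _ _ ha _ _; have := ha x x; move/eqP; rewrite -addr_eq0 -mulr2n mulrn_eq0 /=.
  by move/eqP.
have yz y : y \in N -> z != y.
  by move=> /fnz yN; apply/eqP => e; move: yN; rewrite e mxx eqxx.
have fsum : \sum_(y <- N) fm F z y = 0.
  rewrite big_filter big_mkcond /=.
  rewrite (eq_bigr (fun w => fm F z w)); last by move=> w _; case: eqP => // ->.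
  case: hF => _ _ ha _ hc.
  have := hc z; rewrite mz1 mz2 subrr => h.
  rewrite (eq_bigr (fun w => - fm F w z)); last by move=> w _; rewrite ha.
  by rewrite sumrN -h oppr0.
pose U y := (powR `|fm F z y| p / edist z y) *: (y - z).
pose G y y' := dot (U y) (U y').
have Gs y y' : G y y' = G y' y by rewrite /G dotC.
have Gd y : y \in N -> G y y = powR `|fm F z y| q.
  move=> yN; rewrite /G /U dotZl dotZr.
  have A0 : 0 < edist z y by apply: edist_gt0; exact: yz.
  have hA : dot (y - z) (y - z) = edist z y ^+ 2.
    by rewrite edistC edistE sqr_sqrtr // nrm2_ge0.
  rewrite hA /q powRrM powR_mulrn ?powR_ge0 //; field; exact: lt0r_neq0.
have hW : \sum_(y <- N) U y = 0.
  have := @perturb R d p p0 mup mum F hF opt z zV N uN fnz.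
  rewrite fsum normr0 powR0 ?gt_eqF // => h.
  apply: nrm2_eq0; apply/eqP; rewrite eq_le nrm2_ge0 andbT -sqrtr_eq0 eq_le sqrtr_ge0 andbT; exact: h.
have Grow y : y \in N -> \sum_(y' <- N) G y y' = 0.
  move=> yN; rewrite /G.
  rewrite (eq_bigr (fun y' => dot (U y') (U y))); last by move=> y' _; rewrite dotC.
  by rewrite -dot_suml hW dot0l.
have Gp y y' : y \in N -> y' \in N -> y != y' ->
    G y y + G y' y' + 2 * G y y' <= powR `|fm F z y + fm F z y'| q.
  move=> yN y'N yy.
  have uJ : uniq [:: y; y'] by rewrite /= inE yy.
  have hJ w : w \in [:: y; y'] -> fm F z w != 0.
    by rewrite !inE => /orP[/eqP->|/eqP->]; apply: fnz.
  have := @perturb R d p p0 mup mum F hF opt z zV [:: y; y'] uJ hJ.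
  rewrite !big_cons !big_nil !addr0 -/(U y) -/(U y') => h.
  have e1 : nrm2 (U y + U y') = G y y + G y' y' + 2 * G y y'.
    by rewrite /nrm2 /G !(dotDl, dotDr) (@dotC R d (U y') (U y)); ring.
  rewrite -e1 /q powRrM powR_mulrn ?powR_ge0 //.
  have s0 := sqrtr_ge0 (nrm2 (U y + U y')).
  rewrite -[nrm2 _]sqr_sqrtr ?nrm2_ge0 //.
  by rewrite lerXn2r // nnegrE ?powR_ge0.
have sN3 : (size N <= 3)%N.
  rewrite leqNgt; apply/negP => s4.
  exact: (@key R q q0 q1 _ N (fun y => fm F z y) G uN fnz fsum Gs Grow Gd Gp s4).
have sN1 : size N != 1%N.
  apply/eqP; case E: N fsum fnz => [|y [|? ?]] //= h hz _.
  move: h; rewrite big_cons big_nil addr0 => h.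
  by move: (hz y); rewrite inE eqxx h eqxx => /(_ isT).
move: v0 v2 sN3 sN1; rewrite hN.
by case: (size N) => [|[|[|[|k]]]].
Qed.
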